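(* For all integers $a,d\ge1$, the distributive lattice $J(P_{a,1,1,d})$ is tCDE with edge density $\mathbb{E}(\mathrm{uni}_{J(P_{a,1,1,d})};\mathrm{ddeg})=1$.
   Context: $P_{a,1,1,d}$ is the poset on elements $w_1,\ldots,w_a,x_1,y_1,z_1,\ldots,z_d$ whose cover relations are $w_1\lessdot w_2\lessdot\cdots\lessdot w_a$, $w_a\lessdot x_1$, $w_a\lessdot y_1$, $x_1\lessdot z_1$, $y_1\lessdot z_1$, $z_1\lessdot z_2\lessdot\cdots\lessdot z_d$. $J(P)$ is the lattice of order ideals of $P$ ordered by inclusion; $\mathrm{ddeg}$ is the number of covered elements; $\mathrm{uni}$ is uniform. $\mathcal{T}^+_p(I)=1$ iff $p\notin I$ and $p$ is minimal in $P\setminus I$; $\mathcal{T}^-_p(I)=1$ iff $p\in I$ and $p$ is maximal in $I$ (else $0$). $\mu$ on $J(P)$ is toggle-symmetric if $\mathbb{E}(\mu;\mathcal{T}^+_p)=\mathbb{E}(\mu;\mathcal{T}^-_p)$ for all $p$; $J(P)$ is tCDE if $\mathbb{E}(\mu;\mathrm{ddeg})=\mathbb{E}(\mathrm{uni}_{J(P)};\mathrm{ddeg})$ for every toggle-symmetric $\mu$. *)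

(* Defs.v *)
From HB Require Import structures.
From mathcomp Require Import all_boot all_order all_algebra.
Set Implicit Arguments. Unset Strict Implicit. Unset Printing Implicit Defensive.
Import Order.TTheory GRing.Theory Num.Theory.

(* The poset P_{a,1,1,d}: elements are indices 0 .. a+d+1 of 'I_(a+d+2):
     w_k  (1 <= k <= a)  is index k-1,
     x_1                 is index a,
     y_1                 is index a+1,
     z_k  (1 <= k <= d)  is index a+1+k.                                   *)
Definition Pelt (a d : nat) := 'I_(a + d + 2).

Definition Pcover (a d : nat) : rel (Pelt a d) := fun u v =>
  [|| (u.+1 == v) && (v <= a)%N          (* w_k <. w_{k+1}, w_a <. x_1 *)
    , (u.+1 == a) && (v == a.+1 :> nat)   (* w_a <. y_1 *)
    , (u == a :> nat) && (v == a.+2 :> nat)   (* x_1 <. z_1 *)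
    , (u == a.+1 :> nat) && (v == a.+2 :> nat) (* y_1 <. z_1 *)
    | (a.+2 <= u)%N && (v == u.+1 :> nat) ].  (* z_k <. z_{k+1} *)

Definition Ple (a d : nat) : rel (Pelt a d) := connect (@Pcover a d).

Section Lattice.
Variables (T : finType) (le : rel T).

Definition is_ideal (I : {set T}) : bool :=
  [forall u, forall v, le u v ==> (v \in I) ==> (u \in I)].

(* J covers K in J(P) (i.e. K <. J) *)
Definition Jcovers (J K : {set T}) : bool :=
  [&& is_ideal K, K \proper J &
      ~~ [exists L : {set T}, [&& is_ideal L, K \proper L & L \proper J]]].

Definition ddeg (J : {set T}) : nat := #|[set K : {set T} | Jcovers J K]|.

Definition Tplus (p : T) (I : {set T}) : bool :=
  (p \notin I) && [forall q, (le q p && (q != p)) ==> (q \in I)].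
Definition Tminus (p : T) (I : {set T}) : bool :=
  (p \in I) && [forall q, (le p q && (q != p)) ==> (q \notin I)].

Variable R : realFieldType.
Local Open Scope ring_scope.

(* probability distributions on J(P), represented as functions on {set T}
   vanishing outside the order ideals *)
Definition is_distribution (mu : {set T} -> R) : Prop :=
  [/\ forall I, 0 <= mu I,
      forall I, ~~ is_ideal I -> mu I = 0 &
      \sum_(I : {set T} | is_ideal I) mu I = 1].

Definition expect (mu : {set T} -> R) (f : {set T} -> R) : R :=
  \sum_(I : {set T} | is_ideal I) mu I * f I.

Definition uni (I : {set T}) : R :=
  if is_ideal I then (#|[set J : {set T} | is_ideal J]|%:R)^-1 else 0.

Definition toggle_symmetric (mu : {set T} -> R) : Prop :=
  forall p, expect mu (fun I => (Tplus p I)%:R) = expect mu (fun I => (Tminus p I)%:R).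

Definition tCDE : Prop :=
  forall mu, is_distribution mu -> toggle_symmetric mu ->
    expect mu (fun I => (ddeg I)%:R) = expect uni (fun I => (ddeg I)%:R).

Definition edge_density : R := expect uni (fun I => (ddeg I)%:R).
End Lattice.

(* Main.v *)
Require Import Defs.
From HB Require Import structures.
From mathcomp Require Import all_boot all_order all_algebra.
From mathcomp Require Import zify ring lra.
Set Implicit Arguments. Unset Strict Implicit.
Section S.
Variables a d : nat.
Hypothesis ha : (1 <= a)%N.
Hypothesis hd : (1 <= d)%N.
Definition R0 (u v : nat) : bool := (u == v) || ((u < v) && ~~((u == a) && (v == a.+1))).
Lemma cover_R0 (u v : Pelt a d) : Pcover u v -> (u < v) && ~~((u == a :> nat) && (v == a.+1 :> nat)).
Proof. rewrite /Pcover. lia. Qed.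
Lemma Ple_R0 (u v : Pelt a d) : Ple u v -> R0 u v.
Proof.
case/connectP => p pth ->.
elim: p u pth => [|w p IH] u /=; first by rewrite /R0 eqxx.
case/andP => /cover_R0 cw /IH; rewrite /R0. move: cw; move: (nat_of_ord u) (nat_of_ord w) (nat_of_ord (last w p)) => x y z. lia.
Qed.
Lemma step (u v : Pelt a d) : (v:nat) = u.+1 -> (u:nat) != a -> Ple u v.
Proof. move=> h1 h2; apply: connect1; rewrite /Pcover; lia. Qed.
Lemma chain n : forall (u v : Pelt a d), (v:nat) = u + n -> ~~ ((u <= a) && (a < v)) -> Ple u v.
Proof.
elim: n => [|n IH] u v.
  by rewrite addn0 => h _; rewrite (val_inj h) /Ple connect0.
move=> h1 h2.
have hw : (u + n < a + d + 2)%N by have := ltn_ord v; lia.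
apply: (connect_trans (IH u (Ordinal hw) erefl _)); first by rewrite /=; lia.
apply: step => /=; lia.
Qed.
Lemma R0_Ple (u v : Pelt a d) : R0 u v -> Ple u v.
Proof.
move=> h; move: h; rewrite /R0 => h.
have hv := ltn_ord v.
case: (boolP ((u <= a) && (a < v))) => huv; last first.
  have : (u:nat) <= v by lia.
  move/subnKC => e. apply: (chain (n := v - u)); first lia. exact: huv.
case: (boolP ((v:nat) == a.+1)) => hva.
  (* u < a *)
  have h1 : (a.-1 < a + d + 2)%N by lia.
  apply: (connect_trans (y := Ordinal h1)).
    apply: (chain (n := a.-1 - u)) => /=; lia.
  apply: connect1; rewrite /Pcover /=; lia.
have h1 : (a < a + d + 2)%N by lia.
have h2 : (a.+2 < a + d + 2)%N by lia.
apply: (connect_trans (y := Ordinal h1)).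
  apply: (chain (n := a - u)) => /=; lia.
apply: (connect_trans (y := Ordinal h2)).
  apply: connect1; rewrite /Pcover /=; lia.
apply: (chain (n := v - a.+2)) => /=; lia.
Qed.
Lemma PleE (u v : Pelt a d) : Ple u v = R0 u v.
Proof. by apply/idP/idP; [apply: Ple_R0 | apply: R0_Ple]. Qed.
Local Notation le := (@Ple a d).
Local Notation T := (Pelt a d).
Lemma idealP (I : {set T}) : reflect (forall u v, le u v -> v \in I -> u \in I) (is_ideal le I).
Proof.
apply: (iffP forallP) => [h u v | h u]; first by move: (h u) => /forallP /(_ v) /implyP H /H /implyP.
by apply/forallP => v; apply/implyP => /h H; apply/implyP.
Qed.
Lemma le_nat (u v : T) : le u v -> (u:nat) <= v.
Proof. rewrite PleE /R0; lia. Qed.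
Lemma le_eq (u v : T) : le u v -> (u:nat) = v -> u = v.
Proof. by move=> _ /val_inj. Qed.
Lemma TminusP (p : T) (I : {set T}) : reflect (p \in I /\ forall q, le p q -> q != p -> q \notin I) (Tminus le p I).
Proof.
rewrite /Tminus; apply: (iffP andP) => [[h1 /forallP h2]|[h1 h2]]; split => //.
  by move=> q l n; move: (h2 q); rewrite l n.
by apply/forallP => q; apply/implyP => /andP [l n]; apply: h2.
Qed.
Lemma TplusP (p : T) (I : {set T}) : reflect (p \notin I /\ forall q, le q p -> q != p -> q \in I) (Tplus le p I).
Proof.
rewrite /Tplus; apply: (iffP andP) => [[h1 /forallP h2]|[h1 h2]]; split => //.
  by move=> q l n; move: (h2 q); rewrite l n.
by apply/forallP => q; apply/implyP => /andP [l n]; apply: h2.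
Qed.
Lemma covers_minus (I : {set T}) p : is_ideal le I -> Tminus le p I -> Jcovers le I (I :\ p).
Proof.
move=> /idealP hI /TminusP [pI hp]; apply/and3P; split.
- apply/idealP => u v l; rewrite !inE => /andP [vp vI]; rewrite (hI u v l vI) andbT.
  apply/eqP => up; subst u; by move: (hp v l vp); rewrite vI.
- by apply: properD1.
- apply/negP => /existsP [L /and3P [_ h1 h2]].
  have c1 := proper_card h1; have c2 := proper_card h2.
  by move: c2; rewrite (cardsD1 p I) pI add1n ltnS leqNgt c1.
Qed.
Lemma covers_inv (I K : {set T}) : is_ideal le I -> Jcovers le I K ->
  exists2 p, Tminus le p I & K = I :\ p.
Proof.
move=> /idealP hI /and3P [/idealP hK KI nL].
have [_ [x xI xK]] := properP KI.
have x0 : x \in I :\: K by rewrite inE xK xI.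
case: (arg_minnP (fun i : T => (i:nat)) x0) => p pIK pmin0.
have pmin : forall j, j \in I :\: K -> (p:nat) <= j by move=> j jIK; apply: pmin0.
move: (pIK : p \in I :\: K); rewrite inE => /andP [pK pI].
have Lid : is_ideal le (p |: K).
  apply/idealP => u v l; rewrite !inE => /orP [/eqP vp|vK]; last by rewrite (hK u v l vK) orbT.
  subst v; case: (boolP (u == p)) => //= up.
  have uI := hI u p l pI.
  case: (boolP (u \in K)) => // uK.
  have := pmin u; rewrite inE uK uI => /(_ isT).
  have := le_nat l. have : (u:nat) != p by apply: contra up => /eqP/val_inj ->.
  by move=> h1 h2 h3; move: h1; rewrite eqn_leq h2 h3.
have sub : p |: K \subset I by apply/subsetP => z; rewrite !inE => /orP [/eqP ->|/(subsetP (proper_sub KI))].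
have eqI : p |: K = I.
  apply/eqP; rewrite eqEproper sub /=; apply: contra nL => pr.
  apply/existsP; exists (p |: K); rewrite Lid pr andbT.
  by rewrite properUr // sub1set.
exists p; last by rewrite -eqI setU1K.
apply/TminusP; split => // q l qp; apply/negP; rewrite -eqI !inE (negbTE qp) /= => qK.
by move: (hK p q l qK); rewrite (negbTE pK).
Qed.
Lemma ddegE (I : {set T}) : is_ideal le I -> ddeg le I = #|[set p | Tminus le p I]|.
Proof.
move=> hI; rewrite /ddeg.
have -> : [set K | Jcovers le I K] = (fun p => I :\ p) @: [set p | Tminus le p I].
  apply/setP => K; rewrite inE; apply/idP/imsetP.
    by move/(covers_inv hI) => [p hp ->]; exists p; rewrite ?inE.
  by case=> p; rewrite inE => hp ->; exact: covers_minus.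
apply: card_in_imset => p q; rewrite !inE => /TminusP[pI _] /TminusP[qI _] e.
apply/eqP; apply: contraT => pq.
have : p \in I :\ q by rewrite !inE pI andbT.
by rewrite -e !inE eqxx.
Qed.
Lemma minus_down (I : {set T}) p : is_ideal le I -> Tminus le p I ->
  is_ideal le (I :\ p) /\ Tplus le p (I :\ p).
Proof.
move=> hI hm; split; first by case/and3P: (covers_minus hI hm).
case/TminusP: hm => pI _; apply/TplusP; split; first by rewrite !inE eqxx.
move=> q l qp; rewrite !inE qp /=; exact: (idealP _ hI q p l pI).
Qed.
Lemma plus_up (I : {set T}) p : is_ideal le I -> Tplus le p I ->
  is_ideal le (p |: I) /\ Tminus le p (p |: I).
Proof.
move=> /idealP hI /TplusP [pI hp]; split.
  apply/idealP => u v l; rewrite !inE => /orP [/eqP vp|vI]; last by rewrite (hI u v l vI) orbT.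
  subst v; case: (boolP (u == p)) => //= up; exact: hp.
apply/TminusP; split; first by rewrite !inE eqxx.
move=> q l qp; rewrite !inE (negbTE qp) /=; apply/negP => qI.
by move: (hI p q l qI); rewrite (negbTE pI).
Qed.
Lemma toggle_card p : #|[set I | is_ideal le I && Tplus le p I]| = #|[set I | is_ideal le I && Tminus le p I]|.
Proof.
have -> : [set I | is_ideal le I && Tminus le p I] = (fun I => p |: I) @: [set I | is_ideal le I && Tplus le p I].
  apply/setP => K; rewrite inE; apply/idP/imsetP.
    case/andP => hK hm; have [h1 h2] := minus_down hK hm.
    exists (K :\ p); first by rewrite inE h1 h2.
    case/TminusP: hm => pK _; by rewrite setD1K.
  case=> I; rewrite inE => /andP [hI hp] ->; have [h1 h2] := plus_up hI hp; by rewrite h1 h2.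
symmetry; apply: card_in_imset => I J; rewrite !inE => /andP [_ /TplusP [pI _]] /andP [_ /TplusP [pJ _]] e.
by rewrite -(setU1K pI) e setU1K.
Qed.
Definition pre k : {set T} := [set i : T | (i:nat) < k].
Definition Yset : {set T} := [set i : T | ((i:nat) < a) || ((i:nat) == a.+1)].
Lemma neq_nat (u v : T) : (u != v) = ((u:nat) != v).
Proof. by []. Qed.
Lemma classify (I : {set T}) : is_ideal le I -> I = Yset \/ exists2 k, k <= a + d + 2 & I = pre k.
Proof.
move=> /idealP hI.
case: (boolP [exists i, i \notin I]) => [/existsP [i0 i0I]|]; last first.
  move=> /existsPn h; right; exists (a + d + 2) => //; apply/setP => i.
  by rewrite !inE ltn_ord; move: (h i); rewrite negbK.
case: (@arg_minnP _ i0 (fun i => i \notin I) (fun i : T => (i:nat)) i0I) => k kI kmin0.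
have kmin : forall j : T, (j:nat) < k -> j \in I.
  by move=> j jk; apply: contraT => jI; move: (kmin0 j jI); lia.
have key : forall j : T, j \in I -> ((j:nat) < k) || (((k:nat) == a) && ((j:nat) == a.+1)).
  move=> j jI; apply: contraT => hn.
  have jk : (j:nat) != k by apply: contra kI => /eqP /val_inj <-.
  have : le k j by rewrite PleE /R0; move: hn jk; lia.
  by move/hI/(_ jI); rewrite (negbTE kI).
case: (boolP (((k:nat) == a) && [exists j in I, (j:nat) == a.+1])).
  case/andP => /eqP ka /existsP [j /andP [jI /eqP ja]]; left; apply/setP => i; rewrite !inE.
  apply/idP/idP => [/key|]; first lia.
  case/orP => [ia|/eqP ia]; first by apply: kmin; lia.
  by have -> : i = j by apply: val_inj; rewrite /= ia ja.
move=> hn; right; exists k; first by have := ltn_ord k; lia.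
apply/setP => i; rewrite !inE; apply/idP/idP => [iI|]; last exact: kmin.
move: (key i iI); case/orP => // /andP [ka ia]; move: hn; rewrite ka /=.
by move/existsPn/(_ i); rewrite iI ia.
Qed.
Lemma Tplus_pre k p : Tplus le p (pre k) = ((p:nat) == k) || ((k == a) && ((p:nat) == a.+1)).
Proof.
apply/TplusP/idP => [[pn h]|r].
  move: pn; rewrite inE => pn; apply: contraT => hr.
  have kN : k < a + d + 2 by have := ltn_ord p; lia.
  have := h (Ordinal kN); rewrite PleE /R0 neq_nat /= inE ltnn; apply; lia.
split; first by rewrite inE; lia.
move=> q; rewrite PleE /R0 neq_nat inE; lia.
Qed.
Lemma Tminus_pre k p : k <= a + d + 2 -> Tminus le p (pre k) = ((p:nat).+1 == k) || (((p:nat) == a) && (k == a.+2)).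
Proof.
move=> kN; apply/TminusP/idP => [[pk h]|r].
  move: pk; rewrite inE => pk; apply: contraT => hr.
  case: (boolP ((p:nat) == a)) => pa.
    have qN : a.+2 < a + d + 2 by lia.
    have := h (Ordinal qN); rewrite PleE /R0 neq_nat inE /=; lia.
  have qN : (p:nat).+1 < a + d + 2 by lia.
  have := h (Ordinal qN); rewrite PleE /R0 neq_nat inE /=; lia.
split; first by rewrite inE; lia.
move=> q; rewrite PleE /R0 neq_nat inE; lia.
Qed.
Lemma Tplus_Y p : Tplus le p Yset = ((p:nat) == a).
Proof.
apply/TplusP/idP => [[pn h]|r].
  move: pn; rewrite inE => pn; apply: contraT => hr.
  have qN : a < a + d + 2 by lia.
  have := h (Ordinal qN); rewrite PleE /R0 neq_nat inE /=; lia.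
split; first by rewrite inE; lia.
move=> q; rewrite PleE /R0 neq_nat inE; lia.
Qed.
Lemma Tminus_Y p : Tminus le p Yset = ((p:nat) == a.+1).
Proof.
apply/TminusP/idP => [[pk h]|r].
  move: pk; rewrite inE => pk; apply: contraT => hr.
  have qN : a.+1 < a + d + 2 by lia.
  have := h (Ordinal qN); rewrite PleE /R0 neq_nat inE /=; lia.
split; first by rewrite inE; lia.
move=> q; rewrite PleE /R0 neq_nat inE; lia.
Qed.
Lemma card_ideal0 : (0 < #|[set J : {set T} | is_ideal le J]|)%N.
Proof. apply/card_gt0P; exists set0; rewrite inE; apply/idealP => u v _; by rewrite inE. Qed.

Variable R : realFieldType.
Local Open Scope ring_scope.
Import GRing.Theory Num.Theory.

Lemma card_sumR (X : finType) (A : {set X}) : (#|A|)%:R = \sum_x (x \in A)%:R :> R.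
Proof.
rewrite -sum1_card natr_sum big_mkcond /=; apply: eq_bigr => x _.
by case: (x \in A).
Qed.

Lemma sum_eq (g : nat -> R) (j : nat) :
  \sum_(p : T) g p * ((p:nat) == j)%:R = if (j < a + d + 2)%N then g j else 0.
Proof.
case: (ltnP j (a + d + 2)) => hj.
  rewrite (bigD1 (Ordinal hj)) //= eqxx mulr1 big1 ?addr0 // => p pj.
  have : (p:nat) != j by move: pj; rewrite neq_nat.
  by move/negbTE ->; rewrite mulr0.
rewrite big1 // => p _.
have : (p:nat) != j by have := ltn_ord p; lia.
by move/negbTE ->; rewrite mulr0.
Qed.

Lemma sum_or2 (g : nat -> R) (b1 b2 : bool) (j1 j2 : nat) : ~~ [&& b1, b2 & j1 == j2] ->
  \sum_(p : T) g p * ((b1 && ((p:nat) == j1)) || (b2 && ((p:nat) == j2)))%:R =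
  b1%:R * (if (j1 < a + d + 2)%N then g j1 else 0) + b2%:R * (if (j2 < a + d + 2)%N then g j2 else 0).
Proof.
move=> hx; rewrite -!sum_eq !mulr_sumr -big_split /=; apply: eq_bigr => p _.
have : ((b1 && ((p:nat) == j1)) || (b2 && ((p:nat) == j2)))%:R =
   b1%:R * ((p:nat) == j1)%:R + b2%:R * ((p:nat) == j2)%:R :> R.
  move: hx; case: b1; case: b2 => /= hx; rewrite ?mul1r ?mul0r ?addr0 ?add0r ?orbF //.
  case E1: ((p:nat) == j1); case E2: ((p:nat) == j2) => /=; rewrite ?addr0 ?add0r //.
  by move: hx; rewrite -(eqP E1) -(eqP E2) eqxx.
by move->; rewrite mulrDr; congr (_ + _); rewrite mulrCA.
Qed.

Definition c (i : nat) : R := if (i < a)%N then -1 else if (i <= a.+1)%N then - 2%:R^-1 else 0.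

Lemma key (I : {set T}) : is_ideal le I ->
  (ddeg le I)%:R = 1 + \sum_(p : T) c p * ((Tplus le p I)%:R - (Tminus le p I)%:R) :> R.
Proof.
move=> hI; rewrite ddegE // card_sumR.
have e0 : \sum_(x : T) (x \in [set p | Tminus le p I])%:R = \sum_(x : T) (Tminus le x I)%:R :> R.
  by apply: eq_bigr => x _; rewrite inE.
have e1 : \sum_(p : T) ((1 + c p) * (Tminus le p I)%:R) = \sum_(p : T) (Tminus le p I)%:R + \sum_(p : T) c p * (Tminus le p I)%:R.
  by rewrite -big_split; apply: eq_bigr => p _; rewrite mulrDl mul1r.
have e2 : \sum_(p : T) c p * ((Tplus le p I)%:R - (Tminus le p I)%:R) = \sum_(p : T) c p * (Tplus le p I)%:R - \sum_(p : T) c p * (Tminus le p I)%:R.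
  by rewrite -sumrB; apply: eq_bigr => p _; rewrite mulrBr.
rewrite e0 e2.
suff : \sum_(p : T) ((1 + c p) * (Tminus le p I)%:R) - \sum_(p : T) c p * (Tplus le p I)%:R = 1.
  rewrite e1; lra.
have h2 : (2%:R : R) != 0 by rewrite pnatr_eq0.
case: (classify hI) => [->|[k kN ->]].
  have s1 : \sum_(p : T) (1 + c p) * (Tminus le p Yset)%:R = \sum_(p : T) (1 + c p) * ((true && ((p:nat) == a.+1)) || (false && ((p:nat) == a.+1)))%:R.
    by apply: eq_bigr => p _; rewrite Tminus_Y orbF.
  have s2 : \sum_(p : T) c p * (Tplus le p Yset)%:R = \sum_(p : T) c p * ((true && ((p:nat) == a)) || (false && ((p:nat) == a)))%:R.
    by apply: eq_bigr => p _; rewrite Tplus_Y orbF.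
  rewrite s1 s2 (sum_or2 (fun n => 1 + c n)) // (sum_or2 c) //= /c.
  have -> : (a.+1 < a + d + 2)%N by lia.
  have -> : (a < a + d + 2)%N by lia.
  have h3 : (a.+1 < a)%N = false by rewrite ltnNge leqnSn.
  rewrite h3 ltnSn ltnn leqnSn /= !mul1r !mul0r !addr0; lra.
have s1 : \sum_(p : T) (1 + c p) * (Tminus le p (pre k))%:R = \sum_(p : T) (1 + c p) * (((k != 0%N) && ((p:nat) == k.-1)) || ((k == a.+2) && ((p:nat) == a)))%:R.
  by apply: eq_bigr => p _; rewrite Tminus_pre //; congr (_ * (_ %:R)); lia.
have s2 : \sum_(p : T) c p * (Tplus le p (pre k))%:R = \sum_(p : T) c p * ((true && ((p:nat) == k)) || ((k == a) && ((p:nat) == a.+1)))%:R.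
  by apply: eq_bigr => p _; rewrite Tplus_pre.
rewrite s1 s2 (sum_or2 (fun n => 1 + c n)); last lia.
rewrite (sum_or2 c); last lia.
rewrite /c.
have r1 : (a < a + d + 2)%N by lia.
have r2 : (a.+1 < a + d + 2)%N by lia.
have r3 : (k.-1 < a + d + 2)%N by lia.
have h3 : (a.+1 < a)%N = false by rewrite ltnNge leqnSn.
rewrite r1 r2 r3 h3 ltnSn ltnn leqnSn /=.
case: (boolP (k != 0%N)) => ?; case: (boolP (k == a.+2)) => ?; case: (boolP (k == a)) => ?;
repeat (case: ifP => ?); try (exfalso; lia).
all: rewrite /= ?mul1r ?mul0r ?add0r ?addr0.
all: lra.
Qed.
Lemma expect_ddeg (mu : {set T} -> R) : is_distribution le mu -> toggle_symmetric le mu ->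
  expect le mu (fun I => (ddeg le I)%:R) = 1.
Proof.
case=> _ _ hs ht; rewrite /expect.
rewrite (eq_bigr (fun I => mu I + \sum_(p:T) c p * (mu I * ((Tplus le p I)%:R - (Tminus le p I)%:R)))); last first.
  by move=> I hI; rewrite key // mulrDr mulr1 mulr_sumr; congr (_ + _); apply: eq_bigr => p _; ring.
rewrite big_split /= hs exchange_big /= big1 ?addr0 // => p _.
rewrite -mulr_sumr.
have := ht p; rewrite /expect => e.
rewrite (eq_bigr (fun I => mu I * (Tplus le p I)%:R - mu I * (Tminus le p I)%:R)); last by move=> I _; rewrite mulrBr.
by rewrite sumrB e subrr mulr0.
Qed.
Lemma uni_dist : is_distribution le (uni le R).
Proof.
split.
- by move=> I; rewrite /uni; case: ifP => _ //; rewrite invr_ge0 ler0n.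
- by move=> I nI; rewrite /uni (negbTE nI).
rewrite (eq_bigr (fun _ => (#|[set J : {set T} | is_ideal le J]|%:R)^-1)); last by move=> I hI; rewrite /uni hI.
rewrite (eq_bigl (fun I => I \in [set J | is_ideal le J])); last by move=> I; rewrite inE.
by rewrite sumr_const -(mulr_natr (_^-1)) mulVf // pnatr_eq0 -lt0n card_ideal0.
Qed.
Lemma uni_sum (b : {set T} -> bool) : \sum_(I : {set T} | is_ideal le I) uni le R I * (b I)%:R =
  (#|[set J : {set T} | is_ideal le J]|%:R)^-1 * #|[set I | is_ideal le I && b I]|%:R.
Proof.
rewrite [X in _ = _ * X]card_sumR mulr_sumr big_mkcond /=; apply: eq_bigr => I _; rewrite /uni inE.
by case: (is_ideal le I) => /=; rewrite ?mulr0.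
Qed.
Lemma uni_ts : toggle_symmetric le (uni le R).
Proof. by move=> p; rewrite /expect !uni_sum toggle_card. Qed.
End S.

Import Order.TTheory GRing.Theory Num.Theory.
Local Open Scope ring_scope.

Theorem proposition6p1 (R : realFieldType) (a d : nat) :
  (1 <= a)%N -> (1 <= d)%N ->
  tCDE (@Ple a d) R /\ edge_density (@Ple a d) R = 1.
Proof.
move=> ha hd; split.
  move=> mu hmu hts; rewrite (expect_ddeg ha hd hmu hts) (expect_ddeg ha hd (uni_dist a d R) (@uni_ts a d R)) //.
by rewrite /edge_density (expect_ddeg ha hd (uni_dist a d R) (@uni_ts a d R)).
Qed.
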